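(* Let $n\ge3$, let $\Phi,\Phi':\mathfrak{B}([n])^{op}\to\mathbf{Gpd}$ be functors and $\theta:\Phi\to\Phi'$ a natural transformation such that $\theta_S:\Phi(S)\to\Phi'(S)$ is an equivalence of categories for every $S\subseteq[n]$ with $n-3\le|S|\le n-1$. Then the induced functor $\operatorname{2lim}_{\mathfrak{B}([n])}\Phi\to\operatorname{2lim}_{\mathfrak{B}([n])}\Phi'$ is an equivalence of categories.
   Context: $[n]=\{1,\dots,n\}$; $\mathfrak{B}([n])$ is the poset of proper subsets of $[n]$ ordered by inclusion. For a functor $\Psi:I^{op}\to\mathbf{Gpd}$ on a poset, $\operatorname{2lim}\Psi$ is the groupoid whose objects are families $(a_U,\alpha_{U,V})$ with $a_U\in\Psi(U)$ and isomorphisms $\alpha_{U,V}:\Psi_{U,V}(a_V)\to a_U$ for $U\le V$ (where $\Psi_{U,V}:\Psi(V)\to\Psi(U)$) satisfying $\alpha_{U,U}=\mathrm{id}$ and $\alpha_{U,W}=\alpha_{U,V}\circ\Psi_{U,V}(\alpha_{V,W})$, and whose morphisms are families $g_U:a_U\to b_U$ with $g_U\circ\alpha_{U,V}=\beta_{U,V}\circ\Psi_{U,V}(g_V)$. The induced functor sends $(a_U,\alpha_{U,V})$ to $(\theta_U(a_U),\theta_U(\alpha_{U,V}))$. *)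

(* Defs.v *)
From Stdlib Require Import ProofIrrelevance FunctionalExtensionality.
From HB Require Import structures.
From mathcomp Require Import all_boot.
Set Implicit Arguments. Unset Strict Implicit. Unset Printing Implicit Defensive.

Record Category := Cat {
  cobj :> Type;
  hom : cobj -> cobj -> Type;
  idm : forall x, hom x x;
  cmp : forall x y z, hom y z -> hom x y -> hom x z;
  cmp_idl : forall x y (f : hom x y), cmp (idm y) f = f;
  cmp_idr : forall x y (f : hom x y), cmp f (idm x) = f;
  cmp_assoc : forall x y z w (h : hom z w) (g : hom y z) (f : hom x y),
      cmp h (cmp g f) = cmp (cmp h g) f }.
Arguments hom {c} x y.
Arguments idm {c} x.
Arguments cmp {c x y z} g f.

Definition is_iso (C : Category) (x y : C) (f : hom x y) : Prop :=
  exists g : hom y x, cmp g f = idm x /\ cmp f g = idm y.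

Record Groupoid := Gpd {
  gcat :> Category;
  gpd_iso : forall (x y : gcat) (f : hom x y), is_iso f }.

Record CFunctor (C D : Category) := CFun {
  fobj :> C -> D;
  fmap : forall x y : C, hom x y -> hom (fobj x) (fobj y);
  fmap_id : forall x, fmap (idm x) = idm (fobj x);
  fmap_comp : forall x y z (g : hom y z) (f : hom x y),
      fmap (cmp g f) = cmp (fmap g) (fmap f) }.
Arguments fmap {C D} _ {x y} _.

Definition IsEquivalence (C D : Category) (F : CFunctor C D) : Prop :=
  exists G : CFunctor D C,
    (exists eta : forall x : C, hom x (G (F x)),
        (forall (x x' : C) (f : hom x x'),
            cmp (fmap G (fmap F f)) (eta x) = cmp (eta x') f)
        /\ forall x, is_iso (eta x))
    /\
    (exists eps : forall y : D, hom (F (G y)) y,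
        (forall (y y' : D) (g : hom y y'),
            cmp g (eps y) = cmp (eps y') (fmap F (fmap G g)))
        /\ forall y, is_iso (eps y)).

Definition eq_hom (C : Category) (x y : C) (e : x = y) : hom x y :=
  match e in _ = y' return hom x y' with erefl => idm x end.

Definition Bn (n : nat) := {U : {set 'I_n} | U \proper setT}.

(** For U <= V we have
    dres h : dobj V -> dobj U; strict functoriality is the equality of
    functors Psi_{U,U} = Id and Psi_{U,W} = Psi_{U,V} o Psi_{V,W}
    (equality of objects, and of morphisms up to the induced transport). *)
Record Diagram (n : nat) := Diag {
  dobj : Bn n -> Groupoid;
  dres : forall U V : Bn n, val U \subset val V -> CFunctor (dobj V) (dobj U);
  dres_id_obj : forall (U : Bn n) (h : val U \subset val U) (x : dobj U), dres h x = x;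
  dres_id_hom : forall (U : Bn n) (h : val U \subset val U) (x y : dobj U) (f : hom x y),
      cmp (eq_hom (dres_id_obj h y)) (fmap (dres h) f)
      = cmp f (eq_hom (dres_id_obj h x));
  dres_comp_obj : forall (U V W : Bn n) (hUV : val U \subset val V)
      (hVW : val V \subset val W) (hUW : val U \subset val W) (x : dobj W),
      dres hUW x = dres hUV (dres hVW x);
  dres_comp_hom : forall (U V W : Bn n) (hUV : val U \subset val V)
      (hVW : val V \subset val W) (hUW : val U \subset val W)
      (x y : dobj W) (f : hom x y),
      cmp (eq_hom (dres_comp_obj hUV hVW hUW y)) (fmap (dres hUW) f)
      = cmp (fmap (dres hUV) (fmap (dres hVW) f))
            (eq_hom (dres_comp_obj hUV hVW hUW x)) }.
Arguments dres {n} _ {U V} _.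
Arguments dres_id_obj {n} _ {U} _ _.
Arguments dres_comp_obj {n} _ {U V W} _ _ _ _.

Record Trans (n : nat) (P Q : Diagram n) := Tr {
  tcomp : forall U, CFunctor (dobj P U) (dobj Q U);
  tnat_obj : forall (U V : Bn n) (h : val U \subset val V) (x : dobj P V),
      tcomp U (dres P h x) = dres Q h (tcomp V x);
  tnat_hom : forall (U V : Bn n) (h : val U \subset val V) (x y : dobj P V)
      (f : hom x y),
      cmp (eq_hom (tnat_obj h y)) (fmap (tcomp U) (fmap (dres P h) f))
      = cmp (fmap (dres Q h) (fmap (tcomp V) f)) (eq_hom (tnat_obj h x)) }.
Arguments tcomp {n P Q} _ _.
Arguments tnat_obj {n P Q} _ {U V} _ _.

Record LimObj (n : nat) (P : Diagram n) := LObj {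
  la : forall U, dobj P U;
  lalpha : forall (U V : Bn n) (h : val U \subset val V),
      hom (dres P h (la V)) (la U);
  lalpha_id : forall (U : Bn n) (h : val U \subset val U),
      lalpha h = eq_hom (dres_id_obj P h (la U));
  lalpha_comp : forall (U V W : Bn n) (hUV : val U \subset val V)
      (hVW : val V \subset val W) (hUW : val U \subset val W),
      lalpha hUW = cmp (lalpha hUV)
                       (cmp (fmap (dres P hUV) (lalpha hVW))
                            (eq_hom (dres_comp_obj P hUV hVW hUW (la W)))) }.
Arguments la {n P} _ _.
Arguments lalpha {n P} _ {U V} _.

Record LimHom (n : nat) (P : Diagram n) (a b : LimObj P) := LHom {
  lg : forall U, hom (la a U) (la b U);
  lg_nat : forall (U V : Bn n) (h : val U \subset val V),
      cmp (lg U) (lalpha a h) = cmp (lalpha b h) (fmap (dres P h) (lg V)) }.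
Arguments lg {n P a b} _ _.

Lemma LimHom_ext n (P : Diagram n) (a b : LimObj P) (f g : LimHom a b) :
  (forall U, lg f U = lg g U) -> f = g.
Proof.
case: f => f fn; case: g => g gn /= H.
have E : f = g by apply: functional_extensionality_dep.
subst g; f_equal; apply: proof_irrelevance.
Qed.

Section Lim.
Variables (n : nat) (P : Diagram n).

Definition lim_id (a : LimObj P) : LimHom a a.
Proof.
refine (@LHom n P a a (fun U => idm _) _) => U V h.
by rewrite fmap_id cmp_idl cmp_idr.
Defined.

Definition lim_cmp (a b c : LimObj P) (g : LimHom b c) (f : LimHom a b) :
  LimHom a c.
Proof.
refine (@LHom n P a c (fun U => cmp (lg g U) (lg f U)) _) => U V h.
by rewrite -cmp_assoc lg_nat cmp_assoc lg_nat -cmp_assoc fmap_comp.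
Defined.

Definition LimCat : Category.
Proof.
refine (@Cat (LimObj P) (@LimHom n P) lim_id lim_cmp _ _ _).
- by move=> x y f; apply: LimHom_ext => U /=; rewrite cmp_idl.
- by move=> x y f; apply: LimHom_ext => U /=; rewrite cmp_idr.
- by move=> x y z w h g f; apply: LimHom_ext => U /=; rewrite cmp_assoc.
Defined.
End Lim.

Lemma eq_hom_trans (C : Category) (x y z : C) (e1 : x = y) (e2 : y = z) :
  cmp (eq_hom e2) (eq_hom e1) = eq_hom (etrans e1 e2).
Proof. destruct e2, e1; simpl; by rewrite cmp_idl. Qed.

Lemma eq_hom_fmap (C D : Category) (F : CFunctor C D) (x y : C) (e : x = y) :
  fmap F (eq_hom e) = eq_hom (f_equal F e).
Proof. destruct e; simpl; by rewrite fmap_id. Qed.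

Lemma eq_hom_pi (C : Category) (x y : C) (e1 e2 : x = y) :
  eq_hom e1 = eq_hom e2.
Proof. by rewrite (proof_irrelevance _ e1 e2). Qed.

Lemma eq_hom_flip (C : Category) (a b c d : C) (e1 : a = b) (e2 : c = d)
      (g : hom a c) (k : hom b d) :
  cmp (eq_hom e2) g = cmp k (eq_hom e1) ->
  cmp (eq_hom (esym e2)) k = cmp g (eq_hom (esym e1)).
Proof.
destruct e2, e1; simpl; rewrite cmp_idl cmp_idr => ->.
by rewrite cmp_idl cmp_idr.
Qed.

Lemma cmp_assoc_r (C : Category) (x y z w v : C) (h : hom z w) (g : hom y z)
      (f : hom x y) (k : hom v x) :
  cmp h (cmp g (cmp f k)) = cmp (cmp h (cmp g f)) k.
Proof. by rewrite !cmp_assoc. Qed.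

Section Induced.
Variables (n : nat) (P Q : Diagram n) (t : Trans P Q).

Lemma tnat_hom' (U V : Bn n) (h : val U \subset val V) (x y : dobj P V)
      (f : hom x y) :
  cmp (eq_hom (esym (tnat_obj t h y))) (fmap (dres Q h) (fmap (tcomp t V) f))
  = cmp (fmap (tcomp t U) (fmap (dres P h) f)) (eq_hom (esym (tnat_obj t h x))).
Proof. by apply: eq_hom_flip; apply: tnat_hom. Qed.

Definition lim_map_obj (a : LimObj P) : LimObj Q.
Proof.
refine (@LObj n Q (fun U => tcomp t U (la a U))
  (fun U V h => cmp (fmap (tcomp t U) (lalpha a h))
                    (eq_hom (esym (tnat_obj t h (la a V))))) _ _).
- move=> U h; rewrite lalpha_id eq_hom_fmap eq_hom_trans; exact: eq_hom_pi.
- move=> U V W hUV hVW hUW.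
  rewrite (lalpha_comp a hUV hVW hUW) !fmap_comp.
  rewrite -!cmp_assoc; congr (cmp _ _).
  rewrite [RHS]cmp_assoc tnat_hom' -!cmp_assoc; congr (cmp _ _).
  by rewrite !eq_hom_fmap !eq_hom_trans; apply: eq_hom_pi.
Defined.

Definition lim_map_hom (a b : LimObj P) (g : LimHom a b) :
  LimHom (lim_map_obj a) (lim_map_obj b).
Proof.
refine (@LHom n Q (lim_map_obj a) (lim_map_obj b)
          (fun U => fmap (tcomp t U) (lg g U)) _) => U V h /=.
rewrite cmp_assoc -fmap_comp lg_nat fmap_comp -!cmp_assoc.
by rewrite tnat_hom'.
Defined.

Definition lim_functor : CFunctor (LimCat P) (LimCat Q).
Proof.
refine (@CFun (LimCat P) (LimCat Q) lim_map_obj lim_map_hom _ _).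
- by move=> x; apply: LimHom_ext => U /=; rewrite fmap_id.
- by move=> x y z g f; apply: LimHom_ext => U /=; rewrite fmap_comp.
Defined.
End Induced.
Arguments lim_functor {n P Q} t.

(* Main.v *)
Require Import Defs.
From Stdlib Require Import ProofIrrelevance FunctionalExtensionality ClassicalEpsilon.
From HB Require Import structures.
From mathcomp Require Import all_boot zify.
Set Implicit Arguments. Unset Strict Implicit. Unset Printing Implicit Defensive.

Section Heq.
Variable C : Category.

Definition heq (a b a' b' : C) (f : hom a b) (f' : hom a' b') : Prop :=
  exists (e1 : a = a') (e2 : b = b'), cmp (eq_hom e2) f = cmp f' (eq_hom e1).

Lemma eq_hom_refl (x : C) (e : x = x) : eq_hom e = idm x.
Proof. by rewrite (eq_hom_pi e erefl). Qed.

Lemma heq_refl (a b : C) (f : hom a b) : heq f f.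
Proof. by exists erefl, erefl; rewrite /= cmp_idl cmp_idr. Qed.

Lemma heq_eq (a b : C) (f f' : hom a b) : heq f f' -> f = f'.
Proof. by move=> [e1 [e2]]; rewrite !eq_hom_refl cmp_idl cmp_idr. Qed.

Lemma heq_sym (a b a' b' : C) (f : hom a b) (f' : hom a' b') : heq f f' -> heq f' f.
Proof.
move=> [e1 [e2 E]]; subst; exists erefl, erefl; move: E.
by rewrite /= !cmp_idl !cmp_idr.
Qed.

Lemma heq_trans (a b a' b' a'' b'' : C) (f : hom a b) (f' : hom a' b') (f'' : hom a'' b'') :
  heq f f' -> heq f' f'' -> heq f f''.
Proof.
move=> [e1 [e2 E]] [e3 [e4 E']]; subst; exists erefl, erefl; move: E E'.
by rewrite /= !cmp_idl !cmp_idr => -> ->.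
Qed.

Lemma heq_cmp (a b c a' b' c' : C) (f : hom a b) (f' : hom a' b') (g : hom b c) (g' : hom b' c') :
  heq f f' -> heq g g' -> heq (cmp g f) (cmp g' f').
Proof.
move=> [e1 [e2 E]] [e3 [e4 E']]; subst; move: E E'.
rewrite !eq_hom_refl /= !cmp_idl !cmp_idr => -> ->; exact: heq_refl.
Qed.

Lemma heq_eqhom (x y : C) (e : x = y) : heq (eq_hom e) (idm x).
Proof. by subst; exact: heq_refl. Qed.

Lemma heq_eqhom' (x y : C) (e : x = y) : heq (eq_hom e) (idm y).
Proof. by subst; exact: heq_refl. Qed.

Lemma heq_cmp_eql (a b b' : C) (e : b = b') (f : hom a b) : heq (cmp (eq_hom e) f) f.
Proof. by subst; rewrite /= cmp_idl; exact: heq_refl. Qed.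

Lemma heq_cmp_eqr (a a' b : C) (e : a' = a) (f : hom a b) : heq (cmp f (eq_hom e)) f.
Proof. by subst; rewrite /= cmp_idr; exact: heq_refl. Qed.

Lemma heq_cmpl (a b c b' c' : C) (f : hom a b) (g : hom b c) (g' : hom b' c') (f' : hom a b') :
  heq f f' -> heq g g' -> heq (cmp g f) (cmp g' f').
Proof. exact: heq_cmp. Qed.
End Heq.

Lemma heq_fmap (C D : Category) (F : CFunctor C D) (a b a' b' : C) (f : hom a b) (f' : hom a' b') :
  heq f f' -> heq (fmap F f) (fmap F f').
Proof.
move=> [e1 [e2 E]]; subst; move: E; rewrite /= cmp_idl cmp_idr => ->; exact: heq_refl.
Qed.

Lemma heq_faithful (C D : Category) (F : CFunctor C D)
  (HF : forall (x y : C) (f g : hom x y), fmap F f = fmap F g -> f = g)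
  (a b a' b' : C) (f : hom a b) (f' : hom a' b') :
  a = a' -> b = b' -> heq (fmap F f) (fmap F f') -> heq f f'.
Proof.
move=> e1 e2; subst => H; have := heq_eq H => /HF ->; exact: heq_refl.
Qed.

Section Inv.
Variable G : Groupoid.
Definition ginv (x y : G) (f : hom x y) : hom y x :=
  proj1_sig (constructive_indefinite_description _ (gpd_iso f)).
Lemma inv_l (x y : G) (f : hom x y) : cmp (ginv f) f = idm x.
Proof. by rewrite /ginv; case: constructive_indefinite_description => g [? ?]. Qed.
Lemma inv_r (x y : G) (f : hom x y) : cmp f (ginv f) = idm y.
Proof. by rewrite /ginv; case: constructive_indefinite_description => g [? ?]. Qed.
Lemma inv_uniq (x y : G) (f : hom x y) (g : hom y x) : cmp g f = idm x -> g = ginv f.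
Proof.
move=> H; rewrite -[g]cmp_idr -(inv_r f) cmp_assoc H cmp_idl //.
Qed.
Lemma inv_cmp (x y z : G) (f : hom x y) (g : hom y z) : ginv (cmp g f) = cmp (ginv f) (ginv g).
Proof.
symmetry; apply: inv_uniq.
by rewrite -cmp_assoc (cmp_assoc (ginv g)) inv_l cmp_idl inv_l.
Qed.
Lemma inv_inv (x y : G) (f : hom x y) : ginv (ginv f) = f.
Proof. by symmetry; apply: inv_uniq; rewrite inv_r. Qed.
Lemma inv_idm (x : G) : ginv (idm x) = idm x.
Proof. by symmetry; apply: inv_uniq; rewrite cmp_idl. Qed.
Lemma cmp_inv_K (x y z : G) (f : hom x y) (g : hom z y) : cmp f (cmp (ginv f) g) = g.
Proof. by rewrite cmp_assoc inv_r cmp_idl. Qed.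
Lemma cmp_K_inv (x y z : G) (f : hom x y) (g : hom z x) : cmp (ginv f) (cmp f g) = g.
Proof. by rewrite cmp_assoc inv_l cmp_idl. Qed.
Lemma heq_inv (a b a' b' : G) (f : hom a b) (f' : hom a' b') : heq f f' -> heq (ginv f) (ginv f').
Proof.
move=> [e1 [e2 E]]; subst; move: E; rewrite /= cmp_idl cmp_idr => ->; exact: heq_refl.
Qed.
Lemma heq_eqhom_inv (x y : G) (e : x = y) : heq (ginv (eq_hom e)) (idm x).
Proof. by subst; rewrite /= inv_idm; exact: heq_refl. Qed.
End Inv.

Lemma inv_fmap (G H : Groupoid) (F : CFunctor G H) (x y : G) (f : hom x y) :
  ginv (fmap F f) = fmap F (ginv f).
Proof. by symmetry; apply: inv_uniq; rewrite -fmap_comp inv_l fmap_id. Qed.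

Section Equiv.
Variables (C D : Category) (F : CFunctor C D).

Lemma equiv_faithful : IsEquivalence F ->
  forall (x y : C) (f g : hom x y), fmap F f = fmap F g -> f = g.
Proof.
move=> [G [[eta [Hn Hi]] _]] x y f g E.
have H1 := Hn _ _ f; have H2 := Hn _ _ g; rewrite E H2 in H1.
case: (Hi y) => k [Hk _].
by rewrite -(cmp_idl f) -Hk -cmp_assoc -H1 cmp_assoc Hk cmp_idl.
Qed.

Lemma equiv_full : IsEquivalence F ->
  forall (x y : C) (h : hom (F x) (F y)), exists f : hom x y, fmap F f = h.
Proof.
move=> [G [[eta [Hn Hi]] [eps [Hn' Hi']]]] x y h.
have GF : forall (a b : D) (g g' : hom a b), fmap G g = fmap G g' -> g = g'.
  move=> a b g g' E; have H1 := Hn' _ _ g; have H2 := Hn' _ _ g'; rewrite E -H2 in H1.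
  case: (Hi' a) => k [_ Hk].
  by rewrite -(cmp_idr g) -Hk cmp_assoc H1 -cmp_assoc Hk cmp_idr.
case: (Hi y) => k [Hk1 Hk2].
exists (cmp k (cmp (fmap G h) (eta x))).
apply: GF.
case: (Hi x) => l [Hl1 Hl2].
rewrite -[LHS]cmp_idr -Hl2 cmp_assoc Hn.
rewrite (cmp_assoc (eta y) k) Hk2 cmp_idl -cmp_assoc Hl2 cmp_idr //.
Qed.

Lemma equiv_es : IsEquivalence F ->
  forall y : D, exists (x : C) (e : hom (F x) y), is_iso e.
Proof. move=> [G [_ [eps [_ Hi']]]] y; by exists (G y), (eps y). Qed.

Lemma ffe_equiv
  (HF : forall (x y : C) (f g : hom x y), fmap F f = fmap F g -> f = g)
  (Hfull : forall (x y : C) (h : hom (F x) (F y)), exists f : hom x y, fmap F f = h)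
  (Hes : forall y : D, exists (x : C) (e : hom (F x) y), is_iso e) :
  IsEquivalence F.
Proof.
pose lift x y (h : hom (F x) (F y)) := proj1_sig (constructive_indefinite_description _ (Hfull x y h)).
have liftE : forall x y h, fmap F (@lift x y h) = h.
  by move=> x y h; rewrite /lift; case: constructive_indefinite_description.
pose Go y := proj1_sig (constructive_indefinite_description _ (Hes y)).
have He : forall y, exists e : hom (F (Go y)) y, is_iso e.
  by move=> y; rewrite /Go; case: constructive_indefinite_description.
pose e y := proj1_sig (constructive_indefinite_description _ (He y)).
have eiso : forall y, is_iso (e y).
  by move=> y; rewrite /e; case: constructive_indefinite_description.
pose e' y := proj1_sig (constructive_indefinite_description _ (eiso y)).
have e'P : forall y, cmp (e' y) (e y) = idm _ /\ cmp (e y) (e' y) = idm _.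
  by move=> y; rewrite /e'; case: constructive_indefinite_description.
pose Gm y y' (g : hom y y') := lift _ _ (cmp (e' y') (cmp g (e y))).
have GmE : forall y y' g, fmap F (@Gm y y' g) = cmp (e' y') (cmp g (e y)) by move=> *; apply: liftE.
have Gid : forall y, Gm y y (idm y) = idm (Go y).
  move=> y; apply: HF; rewrite GmE fmap_id cmp_idl; exact: (proj1 (e'P y)).
have Gcomp : forall y y' y'' (g : hom y' y'') (f : hom y y'), Gm _ _ (cmp g f) = cmp (Gm _ _ g) (Gm _ _ f).
  move=> y y' y'' g f; apply: HF; rewrite fmap_comp !GmE.
  by rewrite -!cmp_assoc (cmp_assoc (e y')) (proj2 (e'P y')) cmp_idl.
exists (CFun Gid Gcomp); split.
- exists (fun x => lift x (Go (F x)) (e' (F x))); split.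
  + move=> x x' f /=; apply: HF; rewrite !fmap_comp GmE !liftE.
    by rewrite -!cmp_assoc (proj2 (e'P (F x))) cmp_idr.
  + move=> x; exists (lift _ _ (e (F x))); split; apply: HF;
      rewrite fmap_comp !liftE fmap_id; [exact: (proj2 (e'P _))|exact: (proj1 (e'P _))].
- exists e; split; last exact: eiso.
  move=> y y' g /=; rewrite GmE !cmp_assoc (proj2 (e'P y')) cmp_idl //.
Qed.
End Equiv.

Lemma inv_swap (G : Groupoid) (a b c d : G) (f : hom b d) (x : hom a b) (y : hom c d) (g : hom a c) :
  cmp f x = cmp y g -> cmp (ginv f) y = cmp x (ginv g).
Proof.
move=> H; rewrite -[y]cmp_idr -(inv_r g) (cmp_assoc y g) -H -(cmp_assoc f x).
by rewrite (cmp_assoc (ginv f) f) inv_l cmp_idl.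
Qed.

Lemma lim_iso n (P : Diagram n) (a b : LimObj P) (f : LimHom a b) :
  @is_iso (LimCat P) a b f.
Proof.
have Hn : forall (U V : Bn n) (h : val U \subset val V),
    cmp (ginv (lg f U)) (lalpha b h) = cmp (lalpha a h) (fmap (dres P h) (ginv (lg f V))).
  move=> U V h; rewrite -inv_fmap; apply: inv_swap; exact: lg_nat.
exists (LHom Hn); split; apply: LimHom_ext => U /=; [exact: inv_l|exact: inv_r].
Qed.

Section DiagLemmas.
Variables (n : nat) (P Q : Diagram n) (t : Trans P Q).

Lemma R_id (U : Bn n) (h : val U \subset val U) (x y : dobj P U) (f : hom x y) :
  heq (fmap (dres P h) f) f.
Proof. by exists (dres_id_obj P h x), (dres_id_obj P h y); exact: dres_id_hom. Qed.

Lemma R_comp (U V W : Bn n) (hUV : val U \subset val V) (hVW : val V \subset val W)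
  (hUW : val U \subset val W) (x y : dobj P W) (f : hom x y) :
  heq (fmap (dres P hUW) f) (fmap (dres P hUV) (fmap (dres P hVW) f)).
Proof. by eexists; eexists; exact: dres_comp_hom. Qed.

Lemma R_pi (U V : Bn n) (h1 h2 : val U \subset val V) (x y : dobj P V) (f : hom x y) :
  heq (fmap (dres P h1) f) (fmap (dres P h2) f).
Proof. rewrite (eq_irrelevance h1 h2); exact: heq_refl. Qed.

Lemma th_R (U V : Bn n) (h : val U \subset val V) (x y : dobj P V) (f : hom x y) :
  heq (fmap (tcomp t U) (fmap (dres P h) f)) (fmap (dres Q h) (fmap (tcomp t V) f)).
Proof. by eexists; eexists; exact: tnat_hom. Qed.

Lemma al_id (a : LimObj P) (U : Bn n) (h : val U \subset val U) :
  heq (lalpha a h) (idm (la a U)).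
Proof. rewrite lalpha_id; exact: heq_eqhom'. Qed.

Lemma al_comp (a : LimObj P) (U V W : Bn n) (hUV : val U \subset val V)
  (hVW : val V \subset val W) (hUW : val U \subset val W) :
  heq (lalpha a hUW) (cmp (lalpha a hUV) (fmap (dres P hUV) (lalpha a hVW))).
Proof.
rewrite (lalpha_comp a hUV hVW hUW); apply: heq_cmp; first exact: heq_cmp_eqr.
exact: heq_refl.
Qed.

Lemma al_pi (a : LimObj P) (U V : Bn n) (h1 h2 : val U \subset val V) :
  heq (lalpha a h1) (lalpha a h2).
Proof. rewrite (eq_irrelevance h1 h2); exact: heq_refl. Qed.

Lemma al_th (a : LimObj P) (U V : Bn n) (h : val U \subset val V) :
  heq (lalpha (lim_map_obj t a) h) (fmap (tcomp t U) (lalpha a h)).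
Proof. exact: heq_cmp_eqr. Qed.
End DiagLemmas.

Section Sets.
Variable n : nat.
Definition Wset (i j k : 'I_n) : {set 'I_n} := ~: [set i; j; k].
Lemma W_proper (i j k : 'I_n) : Wset i j k \proper setT.
Proof.
rewrite properE subsetT /=; apply/subsetPn; exists i => //.
by rewrite !inE eqxx.
Qed.
Definition W (i j k : 'I_n) : Bn n := exist _ (Wset i j k) (W_proper i j k).
Lemma subW (X : {set 'I_n}) (i j k : 'I_n) :
  i \notin X -> j \notin X -> k \notin X -> X \subset Wset i j k.
Proof.
move=> Hi Hj Hk; apply/subsetP => x Hx; rewrite !inE.
by apply/negP; case/orP => [/orP []|] /eqP E; subst; [move: Hi|move: Hj|move: Hk]; rewrite Hx.
Qed.
Lemma notinW1 (i j k : 'I_n) : i \notin Wset i j k. Proof. by rewrite !inE eqxx. Qed.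
Lemma notinW2 (i j k : 'I_n) : j \notin Wset i j k. Proof. by rewrite !inE eqxx !orbT. Qed.
Lemma notinW3 (i j k : 'I_n) : k \notin Wset i j k. Proof. by rewrite !inE eqxx !orbT. Qed.
Lemma cardW (i j k : 'I_n) : n - 3 <= #|val (W i j k)| <= n - 1.
Proof.
rewrite /=/Wset; have := cardsC [set i; j; k]; rewrite card_ord.
have H1 : 0 < #|[set i; j; k]| by apply/card_gt0P; exists i; rewrite !inE eqxx.
have H3 : #|[set i; j; k]| <= 3.
  rewrite cardsU cards2 cards1; case: (i != j) => /=; lia.
move: H1 H3; move: (#|[set i; j; k]|) (#|~: [set i; j; k]|) => a b *; apply/andP; split; lia.
Qed.
End Sets.

Section Main.
Variables (n : nat) (i0 : 'I_n) (P Q : Diagram n) (t : Trans P Q).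
Hypothesis HE : forall i j k : 'I_n, IsEquivalence (tcomp t (W i j k)).

Definition V1 (i : 'I_n) := W i i i.
Definition V2 (i j : 'I_n) := W i j j.

Lemma faithfulW i j k (x y : dobj P (W i j k)) (f g : hom x y) :
  fmap (tcomp t (W i j k)) f = fmap (tcomp t (W i j k)) g -> f = g.
Proof. move=> H; exact: (equiv_faithful (HE i j k) H). Qed.

Definition lift i j k (x y : dobj P (W i j k))
  (h : hom (tcomp t (W i j k) x) (tcomp t (W i j k) y)) : hom x y :=
  proj1_sig (constructive_indefinite_description _ (equiv_full (HE i j k) h)).
Lemma liftE i j k (x y : dobj P (W i j k)) (h : hom (tcomp t (W i j k) x) (tcomp t (W i j k) y)) :
  fmap (tcomp t (W i j k)) (lift h) = h.
Proof. by rewrite /lift; case: constructive_indefinite_description. Qed.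

Definition mU (U : Bn n) : 'I_n := odflt i0 [pick i | i \notin val U].
Lemma m_notin (U : Bn n) : mU U \notin val U.
Proof.
rewrite /mU; case: pickP => [x Hx|H] //=; exfalso.
case: U H => U /= HU H; move: HU; rewrite properE => /andP [_ /subsetPn [x _ Hx]].
by move: (H x); rewrite /= Hx.
Qed.
Lemma notin_sub (A B : {set 'I_n}) (x : 'I_n) : A \subset B -> x \notin B -> x \notin A.
Proof. by move=> /subsetP H; apply: contra; apply: H. Qed.

Definition hm (U : Bn n) : val U \subset val (V1 (mU U)) :=
  subW (m_notin U) (m_notin U) (m_notin U).
Definition s2i i j : val (V2 i j) \subset val (V1 i) :=
  subW (notinW1 i j j) (notinW1 i j j) (notinW1 i j j).
Definition s2j i j : val (V2 i j) \subset val (V1 j) :=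
  subW (notinW2 i j j) (notinW2 i j j) (notinW2 i j j).

(** ** Essential surjectivity *)
Section ES.
Variable b : LimObj Q.

Definition xsP (i : 'I_n) := constructive_indefinite_description _ (equiv_es (HE i i i) (la b (V1 i))).
Definition xs (i : 'I_n) : dobj P (V1 i) := proj1_sig (xsP i).
Definition es_e (i : 'I_n) : hom (tcomp t (V1 i) (xs i)) (la b (V1 i)) :=
  proj1_sig (constructive_indefinite_description _ (proj2_sig (xsP i))).

Definition E (U : Bn n) (i : 'I_n) (h : val U \subset val (V1 i)) :
  hom (tcomp t U (dres P h (xs i))) (la b U) :=
  cmp (lalpha b h) (cmp (fmap (dres Q h) (es_e i)) (eq_hom (tnat_obj t h (xs i)))).

Lemma E_heq (U : Bn n) (i : 'I_n) (h : val U \subset val (V1 i)) :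
  heq (E h) (cmp (lalpha b h) (fmap (dres Q h) (es_e i))).
Proof. apply: heq_cmp; [exact: heq_cmp_eqr|exact: heq_refl]. Qed.

Lemma E_restr (U V : Bn n) (i : 'I_n) (hUV : val U \subset val V)
  (hV : val V \subset val (V1 i)) (hU : val U \subset val (V1 i)) :
  heq (fmap (dres Q hUV) (E hV)) (cmp (ginv (lalpha b hUV)) (E hU)).
Proof.
apply: (heq_trans (heq_fmap _ (E_heq hV))); rewrite fmap_comp.
apply: heq_sym.
apply: (heq_trans (heq_cmp (heq_trans (E_heq hU)
    (heq_cmp (R_comp hUV hV hU (es_e i)) (al_comp b hUV hV hU))) (heq_refl _))).
rewrite -cmp_assoc cmp_K_inv; exact: heq_refl.
Qed.

Definition phi (i j : 'I_n) :
  hom (dres P (s2j i j) (xs j)) (dres P (s2i i j) (xs i)) :=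
  @lift i j j _ _ (cmp (ginv (E (s2i i j))) (E (s2j i j))).

Definition psi (U : Bn n) (i j : 'I_n) (hij : val U \subset val (V2 i j))
  (hi : val U \subset val (V1 i)) (hj : val U \subset val (V1 j)) :
  hom (dres P hj (xs j)) (dres P hi (xs i)) :=
  cmp (eq_hom (esym (dres_comp_obj P hij (s2i i j) hi (xs i))))
      (cmp (fmap (dres P hij) (phi i j)) (eq_hom (dres_comp_obj P hij (s2j i j) hj (xs j)))).

Lemma psi_heq (U : Bn n) (i j : 'I_n) (hij : val U \subset val (V2 i j))
  (hi : val U \subset val (V1 i)) (hj : val U \subset val (V1 j)) :
  heq (psi hij hi hj) (fmap (dres P hij) (phi i j)).
Proof. apply: heq_trans (heq_cmp_eql _ _) _; exact: heq_cmp_eqr. Qed.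

Lemma psi_pi (U : Bn n) (i j : 'I_n) (hij hij' : val U \subset val (V2 i j))
  (hi hi' : val U \subset val (V1 i)) (hj hj' : val U \subset val (V1 j)) :
  heq (psi hij hi hj) (psi hij' hi' hj').
Proof.
rewrite (eq_irrelevance hij hij') (eq_irrelevance hi hi') (eq_irrelevance hj hj').
exact: heq_refl.
Qed.

Lemma psi_theta (U : Bn n) (i j : 'I_n) (hij : val U \subset val (V2 i j))
  (hi : val U \subset val (V1 i)) (hj : val U \subset val (V1 j)) :
  fmap (tcomp t U) (psi hij hi hj) = cmp (ginv (E hi)) (E hj).
Proof.
apply: heq_eq.
apply: (heq_trans (heq_fmap _ (psi_heq hij hi hj))).
apply: (heq_trans (th_R t hij (phi i j))).
rewrite /phi liftE fmap_comp -inv_fmap.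
apply: (heq_trans (heq_cmp (E_restr hij (s2j i j) hj) (heq_inv (E_restr hij (s2i i j) hi)))).
rewrite inv_cmp inv_inv -cmp_assoc cmp_inv_K; exact: heq_refl.
Qed.

Lemma cocZ (i j k : 'I_n) (h1 : val (W i j k) \subset val (V2 i j))
  (h2 : val (W i j k) \subset val (V2 j k)) (h3 : val (W i j k) \subset val (V2 i k))
  (hi : val (W i j k) \subset val (V1 i)) (hj : val (W i j k) \subset val (V1 j))
  (hk : val (W i j k) \subset val (V1 k)) :
  cmp (psi h1 hi hj) (psi h2 hj hk) = psi h3 hi hk.
Proof.
apply: (@faithfulW i j k); rewrite fmap_comp !psi_theta.
by rewrite -cmp_assoc cmp_inv_K.
Qed.

Lemma psi_restr (U Z : Bn n) (i j : 'I_n) (hUZ : val U \subset val Z)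
  (hZij : val Z \subset val (V2 i j)) (hZi : val Z \subset val (V1 i)) (hZj : val Z \subset val (V1 j))
  (hUij : val U \subset val (V2 i j)) (hUi : val U \subset val (V1 i)) (hUj : val U \subset val (V1 j)) :
  heq (psi hUij hUi hUj) (fmap (dres P hUZ) (psi hZij hZi hZj)).
Proof.
apply: (heq_trans (psi_heq _ _ _)).
apply: (heq_trans (R_comp hUZ hZij hUij (phi i j))).
apply: heq_fmap; apply: heq_sym; exact: psi_heq.
Qed.

Lemma coc (U : Bn n) (i j k : 'I_n) (hij : val U \subset val (V2 i j))
  (hjk : val U \subset val (V2 j k)) (hik : val U \subset val (V2 i k))
  (hi : val U \subset val (V1 i)) (hj : val U \subset val (V1 j)) (hk : val U \subset val (V1 k))
  (Hi : i \notin val U) (Hj : j \notin val U) (Hk : k \notin val U) :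
  cmp (psi hij hi hj) (psi hjk hj hk) = psi hik hi hk.
Proof.
have hUZ : val U \subset val (W i j k) := subW Hi Hj Hk.
have hZ1 : val (W i j k) \subset val (V2 i j) := subW (notinW1 i j k) (notinW2 i j k) (notinW2 i j k).
have hZ2 : val (W i j k) \subset val (V2 j k) := subW (notinW2 i j k) (notinW3 i j k) (notinW3 i j k).
have hZ3 : val (W i j k) \subset val (V2 i k) := subW (notinW1 i j k) (notinW3 i j k) (notinW3 i j k).
have hZi : val (W i j k) \subset val (V1 i) := subW (notinW1 i j k) (notinW1 i j k) (notinW1 i j k).
have hZj : val (W i j k) \subset val (V1 j) := subW (notinW2 i j k) (notinW2 i j k) (notinW2 i j k).
have hZk : val (W i j k) \subset val (V1 k) := subW (notinW3 i j k) (notinW3 i j k) (notinW3 i j k).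
apply: heq_eq.
apply: (heq_trans (heq_cmp (psi_restr hUZ hZ2 hZj hZk hjk hj hk) (psi_restr hUZ hZ1 hZi hZj hij hi hj))).
rewrite -fmap_comp cocZ; apply: heq_sym; exact: psi_restr.
Qed.

Lemma psi_id (U : Bn n) (i : 'I_n) (hii : val U \subset val (V2 i i))
  (hi : val U \subset val (V1 i)) (Hi : i \notin val U) :
  psi hii hi hi = idm _.
Proof.
have H := coc hii hii hii hi hi hi Hi Hi Hi.
by rewrite -(cmp_K_inv (psi hii hi hi) (psi hii hi hi)) H inv_l.
Qed.

Definition la_a (U : Bn n) : dobj P U := dres P (hm U) (xs (mU U)).

Definition hj' (U X : Bn n) (h : val U \subset val X) : val U \subset val (V1 (mU X)) :=
  subset_trans h (hm X).
Definition hij' (U X : Bn n) (h : val U \subset val X) : val U \subset val (V2 (mU U) (mU X)) :=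
  subW (m_notin U) (notin_sub h (m_notin X)) (notin_sub h (m_notin X)).

Definition al_a (U X : Bn n) (h : val U \subset val X) : hom (dres P h (la_a X)) (la_a U) :=
  cmp (psi (hij' h) (hm U) (hj' h))
      (eq_hom (esym (dres_comp_obj P h (hm X) (hj' h) (xs (mU X))))).

Lemma al_a_heq (U X : Bn n) (h : val U \subset val X) : heq (al_a h) (psi (hij' h) (hm U) (hj' h)).
Proof. exact: heq_cmp_eqr. Qed.

Lemma al_a_id (U : Bn n) (h : val U \subset val U) :
  al_a h = eq_hom (dres_id_obj P h (la_a U)).
Proof.
apply: heq_eq; apply: (heq_trans (al_a_heq h)).
have hii : val U \subset val (V2 (mU U) (mU U)) := subW (m_notin U) (m_notin U) (m_notin U).
apply: (heq_trans (psi_pi _ hii _ (hm U) _ (hm U))).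
rewrite psi_id; last exact: m_notin.
apply: heq_sym; exact: heq_eqhom'.
Qed.

Lemma al_a_comp (U V X : Bn n) (hUV : val U \subset val V) (hVX : val V \subset val X)
  (hUX : val U \subset val X) :
  al_a hUX = cmp (al_a hUV) (cmp (fmap (dres P hUV) (al_a hVX))
                  (eq_hom (dres_comp_obj P hUV hVX hUX (la_a X)))).
Proof.
apply: heq_eq; apply: heq_sym.
apply: (heq_trans (heq_cmp (heq_cmp_eqr _ _) (heq_refl _))).
have HUj : mU V \notin val U := notin_sub hUV (m_notin V).
have HUk : mU X \notin val U := notin_sub hUX (m_notin X).
have hjk : val U \subset val (V2 (mU V) (mU X)) := subW HUj HUk HUk.
have hk : val U \subset val (V1 (mU X)) := subW HUk HUk HUk.
apply: (heq_trans (heq_cmp (heq_trans (heq_fmap _ (al_a_heq hVX))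
   (heq_sym (psi_restr hUV (hij' hVX) (hm V) (hj' hVX) hjk (hj' hUV) hk))) (al_a_heq hUV))).
rewrite (coc _ _ (hij' hUX)) ?m_notin //.
apply: (heq_trans _ (heq_sym (al_a_heq hUX))); exact: psi_pi.
Qed.

Definition a_obj : LimObj P := LObj al_a_id al_a_comp.

Lemma eps_nat (U X : Bn n) (h : val U \subset val X) :
  cmp (E (hm U)) (lalpha (lim_map_obj t a_obj) h)
  = cmp (lalpha b h) (fmap (dres Q h) (E (hm X))).
Proof.
apply: heq_eq.
apply: (heq_trans (heq_cmp (al_th t a_obj h) (heq_refl _))).
apply: (heq_trans (heq_cmp (heq_fmap _ (al_a_heq h)) (heq_refl _))).
rewrite psi_theta cmp_inv_K.
apply: heq_sym.
apply: (heq_trans (heq_cmp (E_restr h (hm X) (hj' h)) (heq_refl _))).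
rewrite cmp_inv_K; exact: heq_refl.
Qed.

Definition eps_hom : LimHom (lim_map_obj t a_obj) b := LHom eps_nat.
End ES.

Lemma lim_es (b : LimObj Q) :
  exists (a : LimCat P) (e : @hom (LimCat Q) (lim_functor t a) b), is_iso e.
Proof. exists (a_obj b), (eps_hom b); exact: lim_iso. Qed.

Lemma g_of_nat (a b : LimObj P) (g : LimHom a b) (U V : Bn n) (h : val U \subset val V) :
  lg g U = cmp (lalpha b h) (cmp (fmap (dres P h) (lg g V)) (ginv (lalpha a h))).
Proof. by rewrite cmp_assoc -lg_nat -cmp_assoc inv_r cmp_idr. Qed.

Lemma lim_faithful (a b : LimCat P) (g g' : hom a b) :
  fmap (lim_functor t) g = fmap (lim_functor t) g' -> g = g'.
Proof.
move=> H; apply: LimHom_ext => U.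
have HU : forall V, fmap (tcomp t V) (lg g V) = fmap (tcomp t V) (lg g' V).
  by move=> V; have := congr1 (fun k => lg k V) H.
rewrite (g_of_nat g (hm U)) (g_of_nat g' (hm U)).
by rewrite (@faithfulW _ _ _ _ _ _ _ (HU (V1 (mU U)))).
Qed.

Section Full.
Variables (a b : LimObj P) (h : LimHom (lim_map_obj t a) (lim_map_obj t b)).

Definition gam (i : 'I_n) : hom (la a (V1 i)) (la b (V1 i)) := @lift i i i _ _ (lg h (V1 i)).

Definition gI (U : Bn n) (i : 'I_n) (hi : val U \subset val (V1 i)) : hom (la a U) (la b U) :=
  cmp (lalpha b hi) (cmp (fmap (dres P hi) (gam i)) (ginv (lalpha a hi))).

Lemma gI_th (U : Bn n) (i : 'I_n) (hi : val U \subset val (V1 i)) :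
  fmap (tcomp t U) (gI hi) = lg h U.
Proof.
apply: heq_eq; rewrite /gI !fmap_comp -inv_fmap.
apply: (heq_trans (heq_cmp (heq_cmp (heq_inv (heq_sym (al_th t a hi))) (th_R t hi (gam i)))
   (heq_sym (al_th t b hi)))).
rewrite /gam liftE cmp_assoc -(lg_nat h hi) -cmp_assoc inv_r cmp_idr; exact: heq_refl.
Qed.

Lemma g_restr (U V : Bn n) (i : 'I_n) (hUV : val U \subset val V)
  (hV : val V \subset val (V1 i)) (hU : val U \subset val (V1 i)) :
  gI hU = cmp (lalpha b hUV) (cmp (fmap (dres P hUV) (gI hV)) (ginv (lalpha a hUV))).
Proof.
apply: heq_eq; rewrite /gI.
apply: (heq_trans (heq_cmp (heq_cmp (heq_inv (al_comp a hUV hV hU)) (R_comp hUV hV hU (gam i)))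
   (al_comp b hUV hV hU))).
rewrite inv_cmp inv_fmap !fmap_comp -inv_fmap !cmp_assoc; exact: heq_refl.
Qed.

Lemma g_indep (U : Bn n) (i j : 'I_n) (hi : val U \subset val (V1 i)) (hj : val U \subset val (V1 j))
  (Hi : i \notin val U) (Hj : j \notin val U) : gI hi = gI hj.
Proof.
have hUV : val U \subset val (V2 i j) := subW Hi Hj Hj.
have E2 : gI (s2i i j) = gI (s2j i j).
  by apply: (@faithfulW i j j); rewrite !gI_th.
by rewrite (g_restr hUV (s2i i j) hi) (g_restr hUV (s2j i j) hj) E2.
Qed.

Definition gU (U : Bn n) : hom (la a U) (la b U) := gI (hm U).

Lemma gU_nat (U X : Bn n) (hUX : val U \subset val X) :
  cmp (gU U) (lalpha a hUX) = cmp (lalpha b hUX) (fmap (dres P hUX) (gU X)).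
Proof.
rewrite /gU (g_indep (hm U) (hj' hUX)) ?m_notin ?(notin_sub hUX (m_notin X)) //.
rewrite (g_restr hUX (hm X) (hj' hUX)).
by rewrite -!cmp_assoc inv_l cmp_idr.
Qed.

Definition g_hom : LimHom a b := LHom gU_nat.

Lemma g_homE : lim_map_hom t g_hom = h.
Proof. apply: LimHom_ext => U /=; exact: gI_th. Qed.
End Full.

Lemma lim_full (a b : LimCat P) (h : hom (lim_functor t a) (lim_functor t b)) :
  exists g : hom a b, fmap (lim_functor t) g = h.
Proof. exists (g_hom h); exact: g_homE. Qed.

Lemma main_equiv : IsEquivalence (lim_functor t).
Proof. apply: ffe_equiv; [exact: lim_faithful|exact: lim_full|exact: lim_es]. Qed.
End Main.

Unset Implicit Arguments.

Theorem corollary5p3 (n : nat) (Hn : 3 <= n) (P Q : Diagram n) (theta : Trans P Q)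
  (Htheta : forall S : Bn n, n - 3 <= #|val S| <= n - 1 ->
              IsEquivalence (tcomp theta S)) :
  IsEquivalence (lim_functor theta).
Proof.
have i0 : 'I_n := Ordinal (leq_trans (isT : 0 < 3) Hn).
apply: (@main_equiv n i0 P Q theta) => i j k.
apply: Htheta; exact: cardW.
Qed.
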